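(* Let $G$ be a connected (finite, simple) graph, let $\mathcal{F}$ be a maximum induced forest of $G$ having the fewest connected components among all maximum induced forests of $G$, let $H$ be the contracted graph and let $B$ be a skeleton of $H$ whose configuration vector is lexicographically highest among all skeletons of $H$ (all as defined in the context). Let $B_1$ be the inner skeleton. Let $v$ be a non-tree vertex and let $x_{T_1}$ be a tree vertex that is a descendant of $v$ in $B_1$. If $vx_{T_1}$ is a 2-edge of $H$, then $x_{T_1}$ is a child of $v$ in $B_1$.
   Context: A maximum induced forest of $G$ is an induced forest with the maximum number of vertices. Let $\mathcal{T}$ be the set of connected components (trees) of $\mathcal{F}$ and $S=V(G)\setminus V(\mathcal{F})$. The graph $H$ has vertex set $\{x_T : T\in\mathcal{T}\}\cup S$ (the $x_T$ are tree vertices, the vertices of $S$ non-tree vertices) and edge set consisting of all edges of $G[S]$ together with all pairs $ux_T$ with $u\in S$, $T\in\mathcal{T}$ such that $u$ has at least one neighbor in $V(T)$ in $G$. An edge $ux_T$ of $H$ is a 2-edge if $u$ has at least two neighbors in $V(T)$ in $G$; all other edges of $H$ are 1-edges. A skeleton is a spanning tree of $H$ rooted at some tree vertex, with all edges directed towards the root. For a skeleton $B$ with root $r$, the level $\ell_B(v)$ of a vertex $v$ is the number of vertices on the path from $v$ to $r$ in $B$ (so $\ell_B(r)=1$), and the configuration vector of $B$ is $\langle |E_2(B)|, \sum_{v:\ell_B(v)=1}\deg_B(v), \sum_{v:\ell_B(v)=2}\deg_B(v),\ldots,\sum_{v:\ell_B(v)=|V(H)|}\deg_B(v)\rangle$,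 where $E_2(B)$ is the set of 2-edges of $B$ and $\deg_B(v)$ is the total (in plus out) degree of $v$ in $B$. Let $L_S$ be the set of vertices of $S$ that are leaves of $B$; the inner skeleton is $B_1=B[V(B)\setminus L_S]$. Parent, child and descendant refer to the rooted in-arborescence $B_1$ (edges directed from child to parent). *)

(* Defs.v *)
From mathcomp Require Import all_boot.
Set Implicit Arguments. Unset Strict Implicit. Unset Printing Implicit Defensive.

Section Defs.
Variable T : finType.
Variable e : rel T.   (* adjacency of the graph G (assumed symmetric, irreflexive) *)

Definition has_cycle_in (U : finType) (r : rel U) (A : {pred U}) : Prop :=
  exists c : seq U, [/\ {subset c <= A}, uniq c, 3 <= size c & cycle r c].

Definition induced_forest (F : {set T}) : Prop := ~ has_cycle_in e (mem F).

Definition max_induced_forest (F : {set T}) : Prop :=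
  induced_forest F /\ forall F' : {set T}, induced_forest F' -> #|F'| <= #|F|.

Definition relF (F : {set T}) : rel T := [rel x y | [&& x \in F, y \in F & e x y]].
Definition compF (F : {set T}) (x : T) : {set T} :=
  [set y in F | connect (relF F) x y].
Definition comps (F : {set T}) : {set {set T}} := [set compF F x | x in F].

(* vertices of the contracted graph H: inl T for a tree T (a component of F),
   inr u for a non-tree vertex u in S = V(G) \ F *)
Definition W : finType := ({set T} + T)%type.

Definition VH (F : {set T}) : {set W} :=
  [set x : W | match x with inl C => C \in comps F | inr u => u \notin F end].

Definition is_tree_vertex (x : W) : bool := if x is inl _ then true else false.

Definition Hadj (F : {set T}) (x y : W) : bool :=
  match x, y with
  | inr u, inr w => [&& u \notin F, w \notin F & e u w]
  | inr u, inl C => [&& u \notin F, C \in comps F & [exists w in C, e u w]]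
  | inl C, inr u => [&& u \notin F, C \in comps F & [exists w in C, e u w]]
  | inl _, inl _ => false
  end.

Definition two_edge (F : {set T}) (x y : W) : bool :=
  Hadj F x y &&
  match x, y with
  | inr u, inl C => 1 < #|[set w in C | e u w]|
  | inl C, inr u => 1 < #|[set w in C | e u w]|
  | _, _ => false
  end.

Definition skeleton (F : {set T}) (B : rel W) (r : W) : Prop :=
  [/\ symmetric B,
      (forall x y, B x y -> Hadj F x y),
      (forall x y, x \in VH F -> y \in VH F -> connect B x y),
      ~ has_cycle_in B (mem (VH F)) &
      ((r \in VH F) && is_tree_vertex r)].

Definition degB (B : rel W) (x : W) : nat := #|[set y | B x y]|.

(* level = number of vertices on the path from x to the root r in B,
   i.e. 1 + (distance from x to r in B) *)
Definition level (B : rel W) (r : W) (x : W) : nat :=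
  (find (fun n => [exists t : n.-tuple W, path B x t && (last x t == r)])
        (iota 0 #|W|)).+1.

Definition E2 (F : {set T}) (B : rel W) : {set {set W}} :=
  [set E : {set W} | [exists x, exists y, (E == [set x; y]) && B x y && two_edge F x y]].

Definition config (F : {set T}) (B : rel W) (r : W) : seq nat :=
  #|E2 F B| ::
  [seq \sum_(x in VH F | level B r x == k) degB B x | k <- iota 1 #|VH F|].

(* strict lexicographic order on sequences (used on sequences of equal length) *)
Fixpoint lex_lt (s t : seq nat) : bool :=
  match s, t with
  | a :: s', b :: t' => (a < b) || ((a == b) && lex_lt s' t')
  | _, _ => false
  end.

Definition LS (F : {set T}) (B : rel W) : {set W} :=
  [set x in VH F | ~~ is_tree_vertex x & degB B x == 1].

Definition inner (F : {set T}) (B : rel W) : rel W :=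
  [rel x y | [&& B x y, x \notin LS F B & y \notin LS F B]].

Definition descendant (B1 : rel W) (r x v : W) : Prop :=
  x != v /\ exists p : seq W, [/\ path B1 x p, last x p = r, uniq (x :: p) & v \in p].

Definition child (B1 : rel W) (r x v : W) : Prop :=
  exists p : seq W, [/\ path B1 x (v :: p), last v p = r & uniq (x :: v :: p)].

End Defs.

(* Main.v *)
Require Import Defs.
From mathcomp Require Import all_boot.
Set Implicit Arguments. Unset Strict Implicit. Unset Printing Implicit Defensive.

Section Gen.
Variable U : finType.

Definition remEdge (R : rel U) (x y : U) : rel U :=
  [rel u w | R u w && ~~ ((u == x) && (w == y)) && ~~ ((u == y) && (w == x))].

Definition addEdge (R : rel U) (a v : U) : rel U :=
  [rel x y | R x y || ((x == a) && (y == v)) || ((x == v) && (y == a))].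

Lemma remEdge_sym R x y : symmetric R -> symmetric (remEdge R x y).
Proof.
move=> Rs u w; rewrite /remEdge /= Rs.
by case: (u == x); case: (w == y); case: (u == y); case: (w == x); rewrite /= ?andbF.
Qed.

Lemma addEdge_sym R a v : symmetric R -> symmetric (addEdge R a v).
Proof.
move=> Rs x y; rewrite /addEdge /= Rs.
by case: (x == a); case: (y == v); case: (x == v); case: (y == a); rewrite /= ?orbF ?orbT.
Qed.

Lemma path_in (R : rel U) (A : {pred U}) x s :
  path R x s -> (forall u w, R u w -> w \in A) -> {subset s <= A}.
Proof.
move=> + RA; elim: s x => [|h l IH] x0 //= /andP[R0 pl] t.
rewrite inE => /orP[/eqP -> | tl]. exact: RA R0. exact: IH _ pl _ tl.
Qed.

Lemma cut_lemma (R : rel U) (A : {pred U}) x y :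
  symmetric R -> irreflexive R -> (forall u w, R u w -> u \in A) ->
  ~ has_cycle_in R A -> R x y -> ~ connect (remEdge R x y) x y.
Proof.
move=> Rs Ri RA Ac Rxy /connectP [p pp Ey].
move: Ey; case/shortenP: pp => p' pp' up' _ Ey.
have pR : path R x p' by apply: sub_path pp' => ? ? /andP[] /andP[].
case: p' pp' up' Ey pR => [|z [|w p'']] pp' up' Ey pR.
- by rewrite /= in Ey; rewrite Ey Ri in Rxy.
- by move: pp'; rewrite /= in Ey; rewrite Ey /remEdge /= !eqxx andbF.
- apply: Ac; exists [:: x, z, w & p'']; split => //.
  + move=> t; rewrite inE => /orP[/eqP -> | ]; first by apply: RA Rxy.
    move=> tin; apply: (path_in pR _ tin) => u0 w0; rewrite Rs; exact: RA.
  + by rewrite /cycle rcons_path pR /= Ey Rs in Rxy *.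
Qed.
Lemma exit_lemma (R : rel U) (S : pred U) x0 y0 :
  (forall u w, R u w -> S u -> ~~ S w -> u = x0 /\ w = y0) ->
  forall t z, path R z t -> S z -> ~~ S (last z t) ->
  exists t2, [/\ path R y0 t2, last y0 t2 = last z t & size t2 < size t].
Proof.
move=> HS; elim=> [|w t IH] z /=; first by move=> _ ->.
move=> /andP[Rzw pt] Sz Sl.
case Sw: (S w).
- by case: (IH w pt Sw Sl) => t2 [p2 l2 s2]; exists t2; split => //; apply: ltnW.
- have [_ E] := HS _ _ Rzw Sz (negbT Sw); subst w.
  by exists t; split.
Qed.

Lemma walk_lb (R : rel U) (A : {pred U}) :
  symmetric R -> irreflexive R -> (forall u w, R u w -> u \in A) ->
  ~ has_cycle_in R A ->
  forall P x t, path R x P -> uniq (x :: P) -> path R x t ->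
  last x t = last x P -> size P <= size t.
Proof.
move=> Rs Ri RA Ac; elim=> [|y P IH] x t //= /andP[Rxy pP] /andP[xP uP] pt lt.
pose S := connect (remEdge R x y) x.
have cut := cut_lemma Rs Ri RA Ac Rxy.
have csym := sym_connect_sym (remEdge_sym x y Rs).
have cyl : connect (remEdge R x y) y (last y P).
  apply/connectP; exists P => //.
  apply: (sub_in_path (P := predC1 x)) pP; last first.
    by apply/allP => z zP; apply/eqP => zx; rewrite -zx zP in xP.
  move=> u w /= ux wx Ruw; rewrite /remEdge /= Ruw (negbTE ux) (negbTE wx) /=.
  by rewrite andbF.
have Sl : ~~ S (last x t).
  rewrite lt /S; apply/negP => cxl; apply: cut.
  by apply: connect_trans cxl _; rewrite csym.
have HS : forall u w, R u w -> S u -> ~~ S w -> u = x /\ w = y.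
  move=> u w Ruw Su Sw.
  case E: (remEdge R x y u w).
    by move: Sw; rewrite /S (connect_trans Su (connect1 E)).
  move: E; rewrite /remEdge /= Ruw /= => /nandP[/negPn/andP[/eqP -> /eqP ->] | /negPn/andP[/eqP Ey /eqP Ex]] //.
  by rewrite Ey in Su; case: (cut Su).
have [t2 [p2 l2 s2]] := exit_lemma HS pt (connect0 _ _) Sl.
apply: leq_trans s2; rewrite ltnS.
apply: (IH y t2 pP uP p2).
by rewrite l2 lt.
Qed.

Lemma path_pres (R : rel U) (S : pred U) :
  (forall x y, R x y -> S x = S y) -> forall s x, path R x s -> S (last x s) = S x.
Proof.
move=> HS; elim=> [|y s IH] x //= /andP[Rxy ps].
by rewrite IH // (HS _ _ Rxy).
Qed.

Lemma add_acyclic (R : rel U) (A : {pred U}) (S : pred U) a v :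
  ~ has_cycle_in R A -> (forall x y, R x y -> S x = S y) -> S a -> ~~ S v ->
  ~ has_cycle_in (addEdge R a v) A.
Proof.
move=> Ac HS Sa Sv [c [cA uc sc cc]].
have subR : {in predC1 a &, subrel (addEdge R a v) R}.
  move=> x y; rewrite !inE => xa ya /=.
  by rewrite /addEdge /= (negbTE xa) (negbTE ya) andbF !orbF.
case: (boolP (a \in c)) => ac; last first.
  apply: Ac; exists c; split => //.
  case: c cA uc sc cc ac => [|x s] //= cA uc sc cc ac.
  apply: (sub_in_path subR) cc.
  have nA : forall z, z \in x :: s -> z \in predC1 a.
    by move=> z zin; rewrite inE; apply/eqP => E; rewrite -E zin in ac.
  apply/allP => z; rewrite inE mem_rcons => /orP[/eqP -> | zin]; apply: nA => //.
  exact: mem_head.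
case/rot_to: ac => i s E.
have cc' : cycle (addEdge R a v) (a :: s) by rewrite -E rot_cycle.
have uc' : uniq (a :: s) by rewrite -E rot_uniq.
have sc' : 3 <= size (a :: s) by rewrite -E size_rot.
have cA' : {subset a :: s <= A} by move=> z; rewrite -E mem_rot; exact: cA.
case: s cc' uc' sc' cA' {E} => [|s0 s1] //= cc' uc' sc' cA'.
move: cc'; rewrite rcons_path /= => /andP[Ra0 /andP[ps Rla]].
move: uc' => /andP[aN us].
have nA : forall z, z \in s0 :: s1 -> z != a.
  by move=> z zin; apply/eqP => E; rewrite -E zin in aN.
have ps' : path R s0 s1.
  apply: (sub_in_path subR) ps; apply/allP => z zin; rewrite inE; exact: nA.
have Sl := path_pres HS ps'.
have s0a := nA _ (mem_head _ _).
have la := nA _ (mem_last s0 s1).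
move: Ra0 Rla; rewrite /addEdge /= (negbTE s0a) (negbTE la) eqxx andbF andbT /= !orbF.
case/orP => [Ra0 | /eqP s0v]; case/orP => [Rla | /eqP lv].
- apply: Ac; exists [:: a, s0 & s1]; split => //=.
  + by rewrite aN.
  + by rewrite rcons_path /= Ra0 ps' Rla.
- by move: Sl; rewrite lv -(HS _ _ Ra0) Sa (negbTE Sv).
- by move: Sl; rewrite (HS _ _ Rla) Sa s0v (negbTE Sv).
- case: s1 sc' ps us lv {cA' nA ps' Sl la aN} => [|w s1] //= _ _ /andP[s0N _] lv.
  by move: (mem_last w s1); rewrite lv -s0v (negbTE s0N).
Qed.

End Gen.

Lemma nth0_iota i N : i < N -> nth 0 (iota 0 N) i = i.
Proof. by move=> iN; rewrite nth_iota. Qed.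

Lemma find_iota_P (P : pred nat) N : find P (iota 0 N) < N -> P (find P (iota 0 N)).
Proof.
move=> fN; have hs : has P (iota 0 N) by rewrite has_find size_iota.
by have := nth_find 0 hs; rewrite nth0_iota.
Qed.

Lemma before_iota (P : pred nat) N i : i < find P (iota 0 N) -> P i = false.
Proof.
move=> H; have := before_find 0 H; rewrite nth0_iota //.
by apply: leq_trans H _; have := find_size P (iota 0 N); rewrite size_iota.
Qed.

Lemma find_prefix (P P' : pred nat) N M : M < N ->
  (forall n, n <= M -> P n = P' n) -> find P (iota 0 N) <= M ->
  find P' (iota 0 N) = find P (iota 0 N).
Proof.
move=> MN HP fM.
have Pk := find_iota_P (leq_ltn_trans fM MN).
apply/eqP; rewrite eqn_leq; apply/andP; split.
- rewrite leqNgt; apply/negP => H; have := before_iota H.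
  by rewrite -HP // Pk.
- rewrite leqNgt; apply/negP => H.
  have Pk' := find_iota_P (ltn_trans H (leq_ltn_trans fM MN)).
  have := before_iota H.
  by rewrite HP ?Pk' // ltnW // (leq_trans H fM).
Qed.

Section Lev.
Variable T : finType.

Lemma level_le (R : rel (W T)) r x t : path R x t -> last x t = r ->
  size t < #|W T| -> level R r x <= (size t).+1.
Proof.
move=> pt lt sW; rewrite /level ltnS leqNgt; apply/negP => H.
have := before_find 0 H; rewrite nth_iota // add0n => /negbT/negP; apply.
by apply/existsP; exists (in_tuple t); rewrite pt lt eqxx.
Qed.

Lemma level_ge (R : rel (W T)) r x m : m <= #|W T| ->
  (forall t, path R x t -> last x t = r -> m <= size t) -> m < level R r x.
Proof.
move=> mW H; rewrite /level ltnS leqNgt; apply/negP => hf.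
have := find_iota_P (leq_trans hf mW).
case/existsP => t /andP[pt /eqP lt].
by have := H t pt lt; rewrite size_tuple leqNgt hf.
Qed.

Lemma level_eq (R R' : rel (W T)) r x M : M < #|W T| ->
  (forall t, size t <= M -> last x t = r -> path R x t = path R' x t) ->
  level R r x <= M.+1 -> level R' r x = level R r x.
Proof.
move=> MW H; rewrite /level ltnS => hf; congr S.
apply: (find_prefix MW) hf => n nM.
apply: eq_existsb => t; case: eqP => lt; rewrite ?andbF //.
by rewrite (H t) // size_tuple.
Qed.

Lemma lex_map (f g : nat -> nat) j n K : j <= K < j + n ->
  (forall i, j <= i < K -> f i = g i) -> f K < g K ->
  lex_lt (map f (iota j n)) (map g (iota j n)).
Proof.
elim: n j => [|n IH] j; first by rewrite addn0 => /andP[a b]; move: (leq_ltn_trans a b); rewrite ltnn.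
move=> /andP[jK Kn] Hfg fK /=.
move: jK; rewrite leq_eqVlt => /orP[/eqP jK | jK]; first by subst j; rewrite fK.
rewrite Hfg ?leqnn ?jK // eqxx /=; apply/orP; right.
apply: IH => //; first by rewrite jK /= addSnnS.
by move=> i /andP[ji iK]; apply: Hfg; rewrite iK (ltnW ji).
Qed.
End Lev.


Lemma Hadj_VH (T : finType) (e : rel T) F (x y : W T) :
  Hadj e F x y -> (x \in VH e F) && (y \in VH e F).
Proof.
by case: x => [C|w]; case: y => [D|z] //=; rewrite /VH !inE => /and3P[-> -> _].
Qed.

Lemma Hadj_irr (T : finType) (e : rel T) F (x : W T) :
  irreflexive e -> Hadj e F x x = false.
Proof. by move=> ei; case: x => [C|w] //=; rewrite ei !andbF. Qed.

Lemma natc n m : n < m -> m <= n -> False.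
Proof. by move=> h1 h2; have := leq_ltn_trans h2 h1; rewrite ltnn. Qed.

Theorem lemma25 (T : finType) (e : rel T)
  (e_sym : symmetric e) (e_irr : irreflexive e)
  (G_conn : forall x y : T, connect e x y)
  (F : {set T})
  (F_max : max_induced_forest e F)
  (F_fewest : forall F' : {set T}, max_induced_forest e F' ->
                #|comps e F| <= #|comps e F'|)
  (B : rel (W T)) (r : W T)
  (B_skel : skeleton e F B r)
  (B_high : forall (B' : rel (W T)) (r' : W T), skeleton e F B' r' ->
              ~~ lex_lt (config e F B r) (config e F B' r'))
  (u : T) (T1 : {set T})
  (u_nontree : u \notin F)
  (T1_tree : T1 \in comps e F)
  (desc : descendant (inner e F B) r (inl T1) (inr u))
  (two : two_edge e F (inr u) (inl T1)) :
  child (inner e F B) r (inl T1) (inr u).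
Proof.
case: B_skel => Bsym BH Bconn Bac Broot.
have BVH : forall x y, B x y -> x \in VH e F.
  by move=> x y /BH /Hadj_VH /andP[].
have Birr : irreflexive B by move=> x; apply/negP => /BH; rewrite Hadj_irr.
case: desc => av [p [pp lp up vp]].
case: p pp lp up vp => [|q p'] // pp lp up vp.
case: (eqVneq q (inr u)) => [qv | qv].
  by subst q; exists p'.
exfalso.
set a : W T := inl T1 in av pp lp up two *.
set v : W T := inr u in av pp lp up vp qv two *.
have pB : path B a (q :: p') by apply: sub_path pp => x y /andP[].
have vp' : v \in p' by move: vp; rewrite inE eq_sym (negbTE qv).
case/splitPr: vp' pB lp up pp => p1 p2 pB lp up pp.
have lv : last v p2 = r by rewrite -lp /= last_cat.
move: (pB) => /=; rewrite -cat_rcons cat_path last_rcons => /andP[Baq /andP[pq1 pv]].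
have pq : path B q (p1 ++ v :: p2) by move: pB => /= /andP[].
have uq : uniq (q :: p1 ++ v :: p2) by move: up => /andP[].
have aN : a \notin q :: p1 ++ v :: p2 by move: up => /andP[].
have uv : uniq (v :: p2).
  by move: uq; rewrite cons_uniq cat_uniq => /andP[_ /and3P[_ _ ->]].
have Ac := Bac.
set M := size p2.
have lbv : forall t, path B v t -> last v t = r -> M <= size t.
  move=> t pt lt; apply: (walk_lb Bsym Birr BVH Ac pv uv pt); by rewrite lt lv.
have lbq : forall t, path B q t -> last q t = r -> M.+1 <= size t.
  move=> t pt lt; apply: leq_trans (walk_lb Bsym Birr BVH Ac pq uq pt _).
    by rewrite /M size_cat /= addnS ltnS leq_addl.
  by rewrite lt -lp.
have lba : forall t, path B a t -> last a t = r -> M.+2 <= size t.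
  move=> t pt lt; apply: leq_trans (walk_lb Bsym Birr BVH Ac pB up pt _).
    by rewrite /M /= size_cat /= ltnS addnS ltnS leq_addl.
  by rewrite lt -lp.
have vVH : v \in VH e F.
  have H : forall s, path B v s -> last v s = r -> v \in VH e F.
    case=> [|z p3] /= => [_ E | /andP[Bvz _] _]; [by rewrite E; case/andP: Broot | exact: BVH Bvz].
  exact: H pv lv.
have p2VH : {subset v :: p2 <= VH e F}.
  move=> z; rewrite inE => /orP[/eqP -> // | zin].
  by apply: (path_in (A := mem (VH e F)) pv _ zin) => x y; rewrite Bsym; apply: BVH.
have MW : M < #|W T|.
  by have := max_card (mem (v :: p2)); rewrite (card_uniqP uv).
have MVH : M.+1 <= #|VH e F|.
  have := subset_leq_card (A := mem (v :: p2)) (B := VH e F) (introT subsetP p2VH).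
  by rewrite (card_uniqP uv).
have bva : B v a = false.
  apply/negP => Bva; apply: Bac; exists (a :: q :: rcons p1 v); split.
  - move=> z zin; rewrite !inE mem_rcons inE in zin; move: zin => /or4P[/eqP -> | /eqP -> | /eqP -> | zin].
    + exact: BVH Baq.
    + by move: Baq; rewrite Bsym => /BVH.
    + by move: Bva => /BVH.
    + by apply: (path_in (A := mem (VH e F)) pq1); rewrite ?mem_rcons ?inE ?zin ?orbT // => x y; rewrite Bsym; apply: BVH.
  - move: up; rewrite -cat_rcons -cat_cons -cat_cons cat_uniq => /andP[-> _] //.
  - by rewrite /= size_rcons.
  - by rewrite /cycle rcons_path /= Baq pq1 last_rcons Bva.
set Bm := remEdge B a q.
set B' := addEdge Bm a v.
have Bm_sym : symmetric Bm by apply: remEdge_sym.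
have B'_sym : symmetric B' by apply: addEdge_sym.
have BmB : subrel Bm B by move=> x y /andP[/andP[]].
have BmB' : subrel Bm B' by move=> x y Bxy; rewrite /B' /addEdge /= Bxy.
have B'va : B' v a by rewrite /B' /addEdge /= !eqxx !orbT.
have B'av : B' a v by rewrite B'_sym.
have aq : a != q by move: up => /andP[]; rewrite inE negb_or => /andP[].
have cBmqv : connect Bm q v.
  apply/connectP; exists (rcons p1 v); last by rewrite last_rcons.
  apply: (sub_in_path (P := predC1 a)) pq1.
    move=> x y; rewrite !inE => xa ya Bxy.
    by rewrite /Bm /remEdge /= Bxy (negbTE xa) (negbTE ya) andbF.
  apply/allP => z zin; rewrite inE; apply/eqP => za.
  by move: aN; rewrite -za -cat_rcons -cat_cons mem_cat zin.
have vS : ~~ connect Bm a v.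
  apply/negP => cav; apply: (cut_lemma Bsym Birr BVH Ac Baq).
  apply: connect_trans cav _; by rewrite (sym_connect_sym Bm_sym).
have skel' : skeleton e F B' r.
  split => //.
  - move=> x y; rewrite /B' /addEdge /= => /orP[/orP[/BmB /BH // | /andP[/eqP -> /eqP ->]] | /andP[/eqP -> /eqP ->]].
    + by move: two => /andP[].
    + by move: two => /andP[].
  - move=> x y xV yV; apply: (connect_sub _ (Bconn x y xV yV)); clear x y xV yV => x y Bxy.
    case E: (Bm x y); first by apply: connect1; apply: BmB'.
    have cB'aq : connect B' a q.
      apply: (connect_trans (connect1 B'av)).
      rewrite (sym_connect_sym B'_sym); apply: connect_sub cBmqv => x0 y0 /BmB' ?.
      exact: connect1.
    move: E; rewrite /Bm /remEdge /= Bxy /= => /nandP[] /negPn /andP[/eqP -> /eqP ->] //.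
    by rewrite (sym_connect_sym B'_sym).
  - apply: (add_acyclic (S := connect Bm a)) => //.
    + by move=> [c [cA uc sc cc]]; apply: Bac; exists c; split => //; apply: sub_cycle cc.
    + move=> x y Bxy; apply/idP/idP => H.
        exact: connect_trans H (connect1 Bxy).
      by apply: connect_trans H (connect1 _); rewrite Bm_sym.
have := B_high _ _ skel'; apply/negP.
have tA : forall t x, path B' x t -> last x t = r -> size t <= M -> path B x t.
  elim=> [|y t IH] x //= /andP[B'xy pt] lt st.
  have pBt := IH y pt lt (ltnW st).
  rewrite pBt andbT.
  move: B'xy; rewrite /B' /addEdge /= => /orP[/orP[/BmB // | /andP[_ /eqP yv]] | /andP[_ /eqP ya]].
  - by move: (lbv t); rewrite -yv => /(_ pBt lt) /(natc st).
  - by move: (lba t); rewrite -ya => /(_ pBt lt) /ltnW /ltnW /(natc st).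
have tB : forall t x, path B x t -> last x t = r -> size t <= M -> path B' x t.
  elim=> [|y t IH] x //= /andP[Bxy pt] lt st.
  rewrite (IH y pt lt (ltnW st)) andbT.
  apply: BmB'; rewrite /Bm /remEdge /= Bxy /=.
  case: (boolP ((x == a) && (y == q))) => [/andP[_ /eqP yq] | _ /=].
    by move: (lbq t); rewrite -yq => /(_ pt lt) /ltnW /(natc st).
  case: (boolP ((x == q) && (y == a))) => [/andP[_ /eqP ya] | //].
  by move: (lba t); rewrite -ya => /(_ pt lt) /ltnW /ltnW /(natc st).
have levEq : forall x, level B r x <= M.+1 -> level B' r x = level B r x.
  move=> x; apply: level_eq MW _ => t st lt.
  by apply/idP/idP => h; [exact: tB h lt st | exact: tA h lt st].
have levEq' : forall x, level B' r x <= M.+1 -> level B r x = level B' r x.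
  move=> x; apply: level_eq MW _ => t st lt.
  by apply/idP/idP => h; [exact: tA h lt st | exact: tB h lt st].
have levv : level B r v = M.+1.
  apply/eqP; rewrite eqn_leq (level_le pv lv MW) /=.
  exact: level_ge (ltnW MW) lbv.
have leva : M.+1 < level B r a.
  apply: level_ge MW _ => t pt lt; exact: ltnW (lba t pt lt).
have levq : M.+1 < level B r q.
  by apply: level_ge MW _ => t pt lt; apply: lbq.
have va : v != a by rewrite eq_sym.
have vq : v != q by rewrite eq_sym.
have deg : forall x, level B r x <= M.+1 -> degB B' x = degB B x + (x == v).
  move=> x lx.
  have xa : x != a by apply/eqP => E; move: lx; rewrite E leqNgt leva.
  have xq : x != q by apply/eqP => E; move: lx; rewrite E leqNgt levq.
  rewrite /degB; case: (eqVneq x v) => [-> | xv].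
  - have -> : [set y | B' v y] = a |: [set y | B v y].
      apply/setP => y; rewrite !inE /B' /addEdge /Bm /remEdge /= ?(negbTE va) ?(negbTE vq) ?eqxx /=.
      by rewrite !andbT orbF orbC.
    by rewrite cardsU1 inE bva /= addnC.
  - have -> : [set y | B' x y] = [set y | B x y].
      apply/setP => y; rewrite !inE /B' /addEdge /Bm /remEdge /= (negbTE xa) (negbTE xq) (negbTE xv) /=.
      by rewrite !andbT !orbF.
    by rewrite addn0.
have predEq : forall i x, i <= M.+1 -> (level B' r x == i) = (level B r x == i).
  move=> i x iM; apply/eqP/eqP => h.
  - by rewrite levEq' // h.
  - by rewrite levEq // h.
have sumEq : forall i, i <= M.+1 ->
    \sum_(x in VH e F | level B' r x == i) degB B' x =
    \sum_(x in VH e F | level B r x == i) (degB B x + (x == v)).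
  move=> i iM.
  rewrite (eq_bigl (fun x => (x \in VH e F) && (level B r x == i))); last by move=> x /=; rewrite predEq.
  by apply: eq_bigr => x /andP[_ /eqP li]; apply: deg; rewrite li.
have hL : lex_lt [seq \sum_(x in VH e F | level B r x == k) degB B x | k <- iota 1 #|VH e F|]
                 [seq \sum_(x in VH e F | level B' r x == k) degB B' x | k <- iota 1 #|VH e F|].
  apply: (lex_map (K := M.+1)).
  - by rewrite ltn0Sn /= add1n ltnS.
  - move=> i /andP[i1 iM] /=.
    rewrite sumEq ?(ltnW iM) // big_split /= [X in _ = _ + X]big1 ?addn0 //.
    move=> x /andP[_ /eqP li]; case: (eqVneq x v) => [xv | //]; exfalso.
    by rewrite xv levv in li; rewrite li ltnn in iM.
  - rewrite /= sumEq // big_split /= -[X in X < _]addn0 ltn_add2l (bigD1 v) /=; last by rewrite vVH levv eqxx.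
    by rewrite eqxx.
have hE : #|E2 e F B| <= #|E2 e F B'|.
  have sub : [set a; v] |: (E2 e F B :\ [set a; q]) \subset E2 e F B'.
    apply/subsetP => E; rewrite in_setU1 in_setD1 => /orP[/eqP -> | /andP[Eaq EB]].
    - rewrite /E2 inE; apply/existsP; exists v; apply/existsP; exists a.
      by rewrite setUC eqxx B'va two.
    - move: EB; rewrite /E2 !inE => /existsP[x /existsP[y /andP[/andP[/eqP EE Bxy] tw]]].
      apply/existsP; exists x; apply/existsP; exists y; rewrite EE eqxx tw andbT /=.
      apply: BmB'; rewrite /Bm /remEdge /= Bxy /=.
      apply/andP; split; apply/negP => /andP[/eqP xa' /eqP yq']; move: Eaq.
      + by rewrite EE xa' yq' eqxx.
      + by rewrite EE xa' yq' setUC eqxx.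
  have nin : [set a; v] \notin E2 e F B.
    rewrite /E2 inE; apply/negP => /existsP[x /existsP[y /andP[/andP[/eqP EE Bxy] _]]].
    have xin : x \in [set a; v] by rewrite EE set21.
    have yin : y \in [set a; v] by rewrite EE set22.
    move: xin yin; rewrite !inE => /orP[/eqP xa' | /eqP xv'] /orP[/eqP ya' | /eqP yv'].
    - by rewrite xa' ya' Birr in Bxy.
    - by rewrite xa' yv' Bsym bva in Bxy.
    - by rewrite xv' ya' bva in Bxy.
    - by rewrite xv' yv' Birr in Bxy.
  rewrite (cardsD1 [set a; q]); apply: leq_trans (subset_leq_card sub).
  by rewrite cardsU1 in_setD1 (negbTE nin) andbF /= leq_add2r leq_b1.
rewrite /config /=.
move: hE; rewrite leq_eqVlt => /orP[/eqP EE | ->] //.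
by rewrite EE ltnn eqxx /= hL.
Qed.
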